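(* For all integers $n \geq k \geq 1$ and $m > 1$ (with $m < n$), $D(\operatorname{SSD}_{n,k,m}) = \Omega(D(\operatorname{SSD}_{n,k}))$ and $R(\operatorname{SSD}_{n,k,m}) = \Omega(R(\operatorname{SSD}_{n,k}))$, where both complexities are taken with respect to the same partition of the input positions between the two players.
   Context: For integers $n \geq k \geq 1$ and an alphabet $\Sigma = \{0,1,\dots,m\}$ with $1 \leq m < n$, define $\operatorname{SSD}_{n,k,m} : \Sigma^n \times \Sigma^k \to \{0,1\}$ by $\operatorname{SSD}_{n,k,m}(x,y) = 1$ if $y$ is a subsequence of $x$ (there exist indices $i_1 < \dots < i_k$ with $x_{i_j} = y_j$ for all $j$) and $0$ otherwise; $\operatorname{SSD}_{n,k} := \operatorname{SSD}_{n,k,1}$ (binary alphabet). In two-party communication, the characters of $(x,y)$ are split between Alice and Bob (the natural partition gives Alice $x$ and Bob $y$), who exchange bits to compute the function. $D(f)$ is the minimum, over deterministic protocols computing $f$, of the maximum number of bits exchanged over all inputs; $R(f)$ is the same for randomized protocols that err with probability at most $1/3$ on every input. *)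

(* Defs.v *)
From mathcomp Require Import all_boot all_algebra.
From Stdlib Require Import ClassicalEpsilon.
Set Implicit Arguments. Unset Strict Implicit. Unset Printing Implicit Defensive.
Import GRing.Theory Num.Theory.
Local Open Scope ring_scope.

(* A partition of the positions is  part : 'I_N -> bool                *)
(* (true = the position belongs to Alice, false = to Bob).             *)

(* At an internal node PNode o f l r the
   player o (true = Alice, false = Bob) sends the bit f z; the protocol
   continues in r if the bit is true and in l otherwise.  The history is
   encoded by the position in the tree. *)
Inductive proto (I : Type) : Type :=
| PLeaf of bool
| PNode of bool & (I -> bool) & proto I & proto I.

Arguments PLeaf {I} b.
Arguments PNode {I} o f l r.

Fixpoint peval (I : Type) (p : proto I) (z : I) : bool :=
  match p with
  | PLeaf b => b
  | PNode _ f l r => if f z then peval r z else peval l z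
  end.

(* number of bits exchanged in the worst case = depth of the tree *)
Fixpoint pdepth (I : Type) (p : proto I) : nat :=
  match p with
  | PLeaf _ => 0
  | PNode _ _ l r => (maxn (pdepth l) (pdepth r)).+1
  end.

Fixpoint pvalid (N s : nat) (part : 'I_N -> bool) (p : proto ('I_N -> 'I_s))
  : Prop :=
  match p with
  | PLeaf _ => True
  | PNode o f l r =>
      (forall z z' : 'I_N -> 'I_s,
          (forall i, part i = o -> z i = z' i) -> f z = f z')
      /\ pvalid part l /\ pvalid part r
  end.

Definition D_le (N s : nat) (part : 'I_N -> bool)
    (f : ('I_N -> 'I_s) -> bool) (c : nat) : Prop :=
  exists p, pvalid part p /\ (pdepth p <= c)%N /\ forall z, peval p z = f z.

(* Randomized (public-coin) protocols: a finite probability distribution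
   over valid deterministic protocol trees; error <= 1/3 on every input. *)
Definition R_le (N s : nat) (part : 'I_N -> bool)
    (f : ('I_N -> 'I_s) -> bool) (c : nat) : Prop :=
  exists P : seq (rat * proto ('I_N -> 'I_s)),
    List.Forall (fun q => 0 <= q.1 /\ pvalid part q.2 /\ (pdepth q.2 <= c)%N) P
    /\ \sum_(q <- P) q.1 = 1
    /\ forall z, \sum_(q <- P | peval q.2 z != f z) q.1 <= 1 / 3%:R.

(* The minimum of a property of naturals (0 if it never holds). *)
Definition nat_min (P : nat -> Prop) : nat :=
  match excluded_middle_informative
          (exists d, P d /\ forall c, P c -> (d <= c)%N) with
  | left H => proj1_sig (constructive_indefinite_description _ H)
  | right _ => 0%N
  end.

Definition Dcc N s part f : nat := nat_min (@D_le N s part f).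
Definition Rcc N s part f : nat := nat_min (@R_le N s part f).

(* SSD_{n,k,m} on inputs z : 'I_(n+k) -> 'I_(m.+1) (alphabet {0,...,m}):
   x = positions 0..n-1, y = positions n..n+k-1; SSD = 1 iff y is a
   subsequence of x (mathcomp's subseq). *)
Definition SSD (n k m : nat) (z : 'I_(n + k) -> 'I_m.+1) : bool :=
  subseq [seq val (z (rshift n j)) | j <- enum 'I_k]
         [seq val (z (lshift k i)) | i <- enum 'I_n].

(* Main.v *)
Require Import Defs.
From mathcomp Require Import all_boot all_algebra.
From Stdlib Require Import ClassicalEpsilon FunctionalExtensionality.
Import GRing.Theory Num.Theory.
Local Open Scope ring_scope.

Fixpoint pmap (I J : Type) (h : J -> I) (p : proto I) : proto J :=
  match p with
  | PLeaf b => PLeaf b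
  | PNode o f l r => PNode o (fun z => f (h z)) (pmap I J h l) (pmap I J h r)
  end.
Arguments pmap {I J} h p.

Lemma pmap_eval I J (h : J -> I) p z : peval (pmap h p) z = peval p (h z).
Proof. by elim: p => //= o f l IHl r IHr; rewrite IHl IHr. Qed.

Lemma pmap_depth I J (h : J -> I) p : pdepth (pmap h p) = pdepth p.
Proof. by elim: p => //= o f l IHl r IHr; rewrite IHl IHr. Qed.

Lemma pmap_valid N s t (part : 'I_N -> bool) (g : 'I_s -> 'I_t) p :
  pvalid part p -> pvalid part (pmap (fun z i => g (z i)) p).
Proof.
elim: p => //= o f l IHl r IHr [Hf [Hl Hr]]; split; last by split; auto.
move=> z z' Hz; apply: Hf => i Hi; by rewrite Hz.
Qed.

Lemma nat_minP (P : nat -> Prop) : (exists c, P c) ->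
  P (nat_min P) /\ forall c, P c -> (nat_min P <= c)%N.
Proof.
move=> [c Pc].
pose pb n := if excluded_middle_informative (P n) then true else false.
have pbP n : reflect (P n) (pb n).
  by rewrite /pb; case: excluded_middle_informative => H; constructor.
have ex : exists n, pb n by exists c; apply/pbP.
have Hex : exists d, P d /\ forall c, P c -> (d <= c)%N.
  case: (ex_minnP ex) => d /pbP Pd Hmin; exists d; split => // c' /pbP; exact: Hmin.
rewrite /nat_min; case: excluded_middle_informative => // H.
by case: (constructive_indefinite_description _ H).
Qed.

Lemma nat_min_mono (P Q : nat -> Prop) : (forall c, P c -> Q c) ->
  (exists c, P c) -> (nat_min Q <= nat_min P)%N.
Proof.
move=> PQ ex; have [H1 _] := nat_minP P ex.
have [_ H2] := nat_minP Q (ex_intro _ _ (PQ _ H1)).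
by apply: H2; apply: PQ.
Qed.

Lemma tree_exists N s (part : 'I_N -> bool) (f : ('I_N -> 'I_s) -> bool) :
  forall (n : nat) (S : seq {ffun 'I_N -> 'I_s}), (size S < n)%N ->
  exists p : proto ('I_N -> 'I_s), pvalid part p /\
    forall g, g \in S -> peval p (fun i => g i) = f (fun i => g i).
Proof.
elim=> [|n IH] S //; rewrite ltnS => HS.
case: S HS => [|g0 S'] HS; first by exists (PLeaf true).
set S := g0 :: S' in HS *.
pose F (g : {ffun 'I_N -> 'I_s}) := f (fun i => g i).
case Hall: (all (fun g => F g == F g0) S).
  exists (PLeaf (F g0)); split => // g gS.
  by have /eqP := allP Hall g gS; rewrite /F /= => ->.
move/negbT: Hall; rewrite -has_predC => /hasP [g1 g1S /= Hg1].
have neq : g1 != g0 by apply: contra Hg1 => /eqP ->.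
have [i Hi] : exists i, g1 i != g0 i.
  apply/existsP; apply: contraR neq => /existsP Hn; apply/eqP/ffunP => i.
  by case: (eqVneq (g1 i) (g0 i)) => // Hi; case: Hn; exists i.
pose q (z : 'I_N -> 'I_s) := z i == g0 i.
pose a (g : {ffun 'I_N -> 'I_s}) := q (fun j => g j).
have s1 : (size (filter a S) < size S)%N.
  rewrite size_filter -(count_predC a S) -{1}[count a S]addn0 ltn_add2l -has_count; apply/hasP; exists g1 => //=.
have s0 : (size (filter (predC a) S) < size S)%N.
  rewrite size_filter -(count_predC a S) -{1}[count (predC a) S]add0n ltn_add2r -has_count; apply/hasP; exists g0 => //=.
    by rewrite inE eqxx.
  by rewrite /a /q /= eqxx.
have [p1 [V1 E1]] := IH _ (leq_trans s1 HS).
have [p0 [V0 E0]] := IH _ (leq_trans s0 HS).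
exists (PNode (part i) q p0 p1); split.
  split => //; move=> z z' Hz; rewrite /q Hz //.
move=> g gS /=; case Hq: (q (fun j => g j)).
  by apply: E1; rewrite mem_filter /a Hq.
by apply: E0; rewrite mem_filter /= /a Hq.
Qed.

Lemma D_exists N s (part : 'I_N -> bool) (f : ('I_N -> 'I_s) -> bool) :
  exists c, D_le part f c.
Proof.
have [p [V E]] := tree_exists N s part f (size (enum {ffun 'I_N -> 'I_s})).+1
  (enum {ffun 'I_N -> 'I_s}) (ltnSn _).
exists (pdepth p), p; split => //; split => // z.
have -> : z = (fun i => (finfun z) i).
  by apply: functional_extensionality => i; rewrite ffunE.
by apply: E; rewrite mem_enum.
Qed.

Lemma R_exists N s (part : 'I_N -> bool) (f : ('I_N -> 'I_s) -> bool) :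
  exists c, R_le part f c.
Proof.
have [c [p [V [Hd E]]]] := D_exists N s part f.
exists c, [:: (1, p)]; split.
  by constructor => //; split => //.
split; first by rewrite big_seq1.
move=> z; rewrite big_cons big_nil /= E eqxx /=.
by [].
Qed.

Section Emb.
Variables (n k m : nat) (Hm : (1 < m)%N).
Let H2 : (2 <= m.+1)%N. Proof. by apply: ltnW. Qed.
Definition emb (x : 'I_2) : 'I_m.+1 := widen_ord H2 x.
Definition embz (z : 'I_(n + k) -> 'I_2) : 'I_(n + k) -> 'I_m.+1 :=
  fun i => emb (z i).

Lemma SSD_emb z : @SSD n k m (embz z) = @SSD n k 1 z.
Proof. by rewrite /SSD; congr subseq; apply: eq_map. Qed.

Lemma D_mono part c : D_le part (@SSD n k m) c -> D_le part (@SSD n k 1) c.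
Proof.
move=> [p [V [Hd E]]]; exists (pmap embz p); split; first exact: pmap_valid.
split; first by rewrite pmap_depth.
by move=> z; rewrite pmap_eval E SSD_emb.
Qed.

Lemma R_mono part c : R_le part (@SSD n k m) c -> R_le part (@SSD n k 1) c.
Proof.
move=> [P [F [S E]]]; exists [seq (q.1, pmap embz q.2) | q <- P]; split.
  apply List.Forall_map; apply: List.Forall_impl F => q [H1 [H2' H3]].
  split => //; split; first exact: pmap_valid.
  by rewrite pmap_depth.
split; first by rewrite big_map.
move=> z; rewrite big_map /=.
under eq_bigl => q do rewrite pmap_eval -SSD_emb.
exact: E.
Qed.
End Emb.

Theorem mainTheorem2 :
  (exists C : rat, 0 < C /\
     forall (n k m : nat) (part : 'I_(n + k) -> bool),
       (1 <= k)%N -> (k <= n)%N -> (1 < m)%N -> (m < n)%N ->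
       C * (Dcc part (@SSD n k 1))%:R <= (Dcc part (@SSD n k m))%:R)
  /\
  (exists C : rat, 0 < C /\
     forall (n k m : nat) (part : 'I_(n + k) -> bool),
       (1 <= k)%N -> (k <= n)%N -> (1 < m)%N -> (m < n)%N ->
       C * (Rcc part (@SSD n k 1))%:R <= (Rcc part (@SSD n k m))%:R).
Proof.
split; exists 1; split => // n k m part _ _ Hm _; rewrite mul1r ler_nat.
  apply: nat_min_mono; last exact: D_exists.
  exact: D_mono.
apply: nat_min_mono; last exact: R_exists.
exact: R_mono.
Qed.
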